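(* Let $V$ be a finite set, $A,B\subseteq V$, ${\bf t}=(t_i)_{i\in V}$ and $\lambda$ complex numbers. Then $$\int\mathcal{D}_{B,{\bf t}}(\psi,\bar\psi)\,f_A^{(\lambda)}=\Big(\prod_{i\in B\setminus A}t_i\Big)\Big[f_{A\setminus B}^{(\lambda)}+\Big(\sum_{i\in B\cap A}(t_i-\lambda)\Big)\tau_{A\setminus B}\Big].$$ In particular, $\int\mathcal{D}_{A,{\bf t}}(\psi,\bar\psi)\,f_A^{(\lambda)}=\lambda+\sum_{i\in A}(t_i-\lambda)$.
   Context: For each $i\in V$ let $\psi_i,\bar\psi_i$ be anticommuting generators of a Grassmann algebra over $\mathbb{C}$; $\tau_A=\prod_{i\in A}\bar\psi_i\psi_i$ ($\tau_\emptyset=1$); $f_A^{(\lambda)}=\lambda(1-|A|)\tau_A+\sum_{i\in A}\tau_{A\setminus\{i\}}-\sum_{i,j\in A,\ i\neq j}\bar\psi_i\psi_j\,\tau_{A\setminus\{i,j\}}$ (so $f_\emptyset^{(\lambda)}=\lambda$). For $B\subseteq V$, $\mathcal{D}_{B,{\bf t}}(\psi,\bar\psi)=\prod_{i\in B}d\psi_i\,d\bar\psi_i\,e^{t_i\bar\psi_i\psi_i}$, integrating only over the variables at vertices of $B$, with Berezin conventions $\int d\psi_i\,d\bar\psi_i\,\bar\psi_i\psi_i=1$ and the integral of $1,\psi_i,\bar\psi_i$ equal to $0$. *)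

(* Defs.v *)
From HB Require Import structures.
From mathcomp Require Import all_boot all_order all_algebra.
Set Implicit Arguments. Unset Strict Implicit. Unset Printing Implicit Defensive.
Import Order.TTheory GRing.Theory Num.Theory.
Local Open Scope ring_scope.

Section Grassmann.
Variable (K : fieldType) (V : finType).

(* generators: (false, i) is psi_i, (true, i) is psibar_i *)
Definition gen := (bool * V)%type.

(* elements of the Grassmann algebra: coefficient of each monomial
   e_S = product of the generators of S in increasing enum_rank order *)
Definition grass := {ffun {set gen} -> K}.

Definition gzero : grass := [ffun _ => 0].
Definition gadd (F G : grass) : grass := [ffun S => F S + G S].
Definition gscale (c : K) (F : grass) : grass := [ffun S => c * F S].
Definition gmono (S : {set gen}) : grass := [ffun U => (U == S)%:R].
Definition gone : grass := gmono set0.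
Definition gconst (c : K) : grass := gscale c gone.

(* sign of e_S e_T = sign * e_(S u T) for disjoint S, T *)
Definition gsign (S T : {set gen}) : K :=
  (-1) ^+ #|[set p : gen * gen | (p.1 \in S) && (p.2 \in T)
                                 && (enum_rank p.2 < enum_rank p.1)%N]|.

Definition gmul (F G : grass) : grass :=
  [ffun U => \sum_(S : {set gen}) \sum_(T : {set gen})
      (if [disjoint S & T] && (S :|: T == U) then gsign S T * F S * G T else 0)].

Definition psi (i : V) : grass := gmono [set (false, i)].
Definition psibar (i : V) : grass := gmono [set (true, i)].

(* exponential (a finite sum since all relevant elements are nilpotent;
   the sum is taken up to the total number of generators) *)
Definition gexp (F : grass) : grass :=
  \big[gadd/gzero]_(k < (#|{: gen}|).+1)
     gscale (k`!%:R)^-1 (iter k (gmul F) gone).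

Definition tau (A : {set V}) : grass :=
  \big[gmul/gone]_(i in A) gmul (psibar i) (psi i).

Definition fA (lam : K) (A : {set V}) : grass :=
  gadd (gadd (gscale (lam * (1 - (#|A|)%:R)) (tau A))
             (\big[gadd/gzero]_(i in A) tau (A :\ i)))
       (gscale (-1) (\big[gadd/gzero]_(i in A) \big[gadd/gzero]_(j in A | j != i)
                       gmul (gmul (psibar i) (psi j)) (tau (A :\ i :\ j)))).

(* Berezin integral  int dpsi_i dpsibar_i : the linear map sending
   (psibar_i psi_i) * e_S' to e_S' for monomials S' not involving i,
   and killing monomials not containing both psi_i and psibar_i.
   Writing e_S = c * (psibar_i psi_i) * e_S' with c = +-1, the coefficient
   c is the coefficient of e_S in (psibar_i psi_i) e_S' (c = c^-1). *)
Definition pairset (i : V) : {set gen} := [set (false, i); (true, i)].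

Definition berezin1 (i : V) (F : grass) : grass :=
  \big[gadd/gzero]_(S : {set gen} | pairset i \subset S)
     gscale (F S * gmul (gmul (psibar i) (psi i)) (gmono (S :\: pairset i)) S)
            (gmono (S :\: pairset i)).

(* int D_{B,t} F = prod_{i in B} int dpsi_i dpsibar_i e^{t_i psibar_i psi_i} F,
   integrating only over the variables at vertices of B *)
Definition berezinD (B : {set V}) (t : V -> K) (F : grass) : grass :=
  foldr (fun i G => berezin1 i (gmul (gexp (gscale (t i) (gmul (psibar i) (psi i)))) G))
        F (enum B).

End Grassmann.

Arguments gzero {K V}. Arguments gadd {K V}. Arguments gscale {K V}.
Arguments gmono {K V}. Arguments gone {K V}. Arguments gconst {K V}.
Arguments gsign {K V}. Arguments gmul {K V}. Arguments psi {K V}.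
Arguments psibar {K V}. Arguments gexp {K V}. Arguments tau {K V}.
Arguments fA {K V}. Arguments pairset {V}. Arguments berezin1 {K V}.
Arguments berezinD {K V}.

(* Main.v *)
Require Import Defs.
From mathcomp Require Import all_boot all_order all_algebra ring.
From mathcomp Require Import complex.
From mathcomp Require Import reals.
Set Implicit Arguments. Unset Strict Implicit. Unset Printing Implicit Defensive.
Import Order.TTheory GRing.Theory Num.Theory.
Local Open Scope ring_scope.

Lemma disjP (T : finType) (A B : {set T}) :
  reflect (forall x, x \in A -> x \in B -> False) [disjoint A & B].
Proof.
rewrite -setI_eq0; apply: (iffP eqP) => [H x xA xB| H].
  by have := in_set0 x; rewrite -H inE xA xB.
by apply/setP => x; rewrite !inE; apply/andP => -[/H].
Qed.

Section S.
Variable (K : fieldType) (V : finType).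
Implicit Types F G H : grass K V.
Implicit Types S T U W X : {set gen V}.
Implicit Types (k : V) (t c lam : K) (A : {set V}).

Lemma gaddE F G : gadd F G = F + G. Proof. by []. Qed.
Lemma gzeroE : gzero = 0 :> grass K V. Proof. by []. Qed.
Lemma gbigE (I : Type) (r : seq I) (P : pred I) (Fi : I -> grass K V) :
  \big[gadd/gzero]_(i <- r | P i) Fi i = \sum_(i <- r | P i) Fi i.
Proof. by apply: (big_rec2 (fun x y => x = y)) => // i x y _ ->. Qed.

Lemma gscaleD c F G : gscale c (F + G) = gscale c F + gscale c G.
Proof. by apply/ffunP => S; rewrite !ffunE mulrDr. Qed.
Lemma gscale0 c : gscale c (0 : grass K V) = 0.
Proof. by apply/ffunP => S; rewrite !ffunE mulr0. Qed.
Lemma gscale0r F : gscale 0 F = 0.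
Proof. by apply/ffunP => S; rewrite !ffunE mul0r. Qed.
Lemma gscale1 F : gscale 1 F = F.
Proof. by apply/ffunP => S; rewrite !ffunE mul1r. Qed.
Lemma gscaleA a b F : gscale a (gscale b F) = gscale (a * b) F.
Proof. by apply/ffunP => S; rewrite !ffunE mulrA. Qed.
Lemma gscaleDl a b F : gscale (a + b) F = gscale a F + gscale b F.
Proof. by apply/ffunP => S; rewrite !ffunE mulrDl. Qed.
Lemma gscaleN1 F : gscale (-1) F = - F.
Proof. by apply/ffunP => S; rewrite !ffunE mulN1r. Qed.
Lemma gscale_sum c (I : Type) (r : seq I) (P : pred I) (Fi : I -> grass K V) :
  gscale c (\sum_(i <- r | P i) Fi i) = \sum_(i <- r | P i) gscale c (Fi i).
Proof. by apply: big_morph; [exact: gscaleD| exact: gscale0]. Qed.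

Lemma gexpand F : F = \sum_S gscale (F S) (gmono S).
Proof.
apply/ffunP => U; rewrite sum_ffunE (bigD1 U) //= !ffunE eqxx mulr1 big1 ?addr0 //.
by move=> S /negbTE SU; rewrite !ffunE eq_sym SU mulr0.
Qed.

Lemma gmonoE S U : gmono S U = (U == S)%:R :> K.
Proof. by rewrite ffunE. Qed.

Lemma gmulDl F G H : gmul (F + G) H = gmul F H + gmul G H.
Proof.
apply/ffunP => U; rewrite !ffunE -big_split; apply: eq_bigr => S _.
rewrite -big_split; apply: eq_bigr => T _; rewrite ffunE.
by case: ifP => _; rewrite /= ?addr0 // mulrDr mulrDl.
Qed.
Lemma gmulDr F G H : gmul F (G + H) = gmul F G + gmul F H.
Proof.
apply/ffunP => U; rewrite !ffunE -big_split; apply: eq_bigr => S _.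
rewrite -big_split; apply: eq_bigr => T _; rewrite ffunE.
by case: ifP => _; rewrite /= ?addr0 // mulrDr.
Qed.
Lemma gmulZl c F G : gmul (gscale c F) G = gscale c (gmul F G).
Proof.
apply/ffunP => U; rewrite !ffunE mulr_sumr; apply: eq_bigr => S _.
rewrite mulr_sumr; apply: eq_bigr => T _; rewrite ffunE.
by case: ifP => _; rewrite ?mulr0 // mulrCA !mulrA.
Qed.
Lemma gmulZr c F G : gmul F (gscale c G) = gscale c (gmul F G).
Proof.
apply/ffunP => U; rewrite !ffunE mulr_sumr; apply: eq_bigr => S _.
rewrite mulr_sumr; apply: eq_bigr => T _; rewrite ffunE.
by case: ifP => _; rewrite ?mulr0 // mulrCA !mulrA.
Qed.
Lemma gmul0l F : gmul 0 F = 0.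
Proof.
apply/ffunP => U; rewrite !ffunE big1 // => S _; rewrite big1 // => T _.
by rewrite ffunE mulr0 mul0r; case: ifP.
Qed.
Lemma gmul0r F : gmul F 0 = 0.
Proof.
apply/ffunP => U; rewrite !ffunE big1 // => S _; rewrite big1 // => T _.
by rewrite ffunE mulr0; case: ifP.
Qed.
Lemma gmul_suml (I : Type) (r : seq I) (P : pred I) (Fi : I -> grass K V) G :
  gmul (\sum_(i <- r | P i) Fi i) G = \sum_(i <- r | P i) gmul (Fi i) G.
Proof. exact: (big_morph (fun F => gmul F G) (fun x y => gmulDl x y G) (gmul0l G)). Qed.
Lemma gmul_sumr (I : Type) (r : seq I) (P : pred I) (Fi : I -> grass K V) G :
  gmul G (\sum_(i <- r | P i) Fi i) = \sum_(i <- r | P i) gmul G (Fi i).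
Proof. exact: (big_morph (fun F => gmul G F) (fun x y => gmulDr G x y) (gmul0r G)). Qed.

Lemma sum_delta (T0 : finType) (a : T0) (g : T0 -> K) :
  \sum_x (x == a)%:R * g x = g a.
Proof.
rewrite (bigD1 a) //= eqxx mul1r big1 ?addr0 // => x /negbTE ->.
by rewrite mul0r.
Qed.

Lemma gmul_mono S T :
  gmul (gmono S) (gmono T) = (
  if [disjoint S & T] then gscale (gsign S T) (gmono (S :|: T)) else 0 :> grass K V).
Proof.
apply/ffunP => U; rewrite ffunE.
rewrite (eq_bigr (fun X => (X == S)%:R * \sum_Y (Y == T)%:R *
   (if [disjoint X & Y] && (X :|: Y == U) then gsign X Y else 0))); last first.
  move=> X _; rewrite mulr_sumr; apply: eq_bigr => Y _; rewrite !ffunE.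
  by case: (_ && _); rewrite ?mulr0 //; ring.
rewrite (sum_delta S) (sum_delta T).
case: (boolP [disjoint S & T]) => D /=; last by rewrite ffunE.
rewrite !ffunE eq_sym; case: (_ == _); by rewrite ?mulr1 ?mulr0.
Qed.


Definition cnt S T := #|[set p : gen V * gen V | (p.1 \in S) && (p.2 \in T)
                                 && (enum_rank p.2 < enum_rank p.1)%N]|.
Lemma gsignE S T : gsign S T = (-1) ^+ cnt S T :> K. Proof. by []. Qed.

Lemma cardsDU (T0 : finType) (X Y : {set T0}) :
  [disjoint X & Y] -> #|X :|: Y| = (#|X| + #|Y|)%N.
Proof. by rewrite -setI_eq0 cardsU => /eqP ->; rewrite cards0 subn0. Qed.

Lemma gsign_sq S T : gsign S T * gsign S T = 1 :> K.
Proof. by rewrite gsignE -exprD -signr_odd oddD addbb. Qed.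

Lemma gsignUl S T W : [disjoint S & T] ->
  gsign (S :|: T) W = gsign S W * gsign T W :> K.
Proof.
move=> D; rewrite !gsignE -exprD /cnt -cardsDU.
  by congr (_ ^+ _); apply: eq_card => p; rewrite !inE -!andbA -andb_orl.
apply/disjP => p; rewrite !inE => /andP[/andP[p1 _] _] /andP[/andP[p1' _] _].
by move/disjP: D => /(_ _ p1 p1').
Qed.

Lemma gsignUr S T W : [disjoint T & W] ->
  gsign S (T :|: W) = gsign S T * gsign S W :> K.
Proof.
move=> D; rewrite !gsignE -exprD /cnt -cardsDU.
  by congr (_ ^+ _); apply: eq_card => p; rewrite !inE; case: (p.1 \in S); rewrite //= -andb_orl.
apply/disjP => p; rewrite !inE => /andP[/andP[_ p1] _] /andP[/andP[_ p1'] _].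
by move/disjP: D => /(_ _ p1 p1').
Qed.

Lemma gsign0l T : gsign set0 T = 1 :> K.
Proof.
rewrite gsignE /cnt (_ : [set _ | _] = set0) ?cards0 //.
by apply/setP => p; rewrite !inE.
Qed.
Lemma gsign0r T : gsign T set0 = 1 :> K.
Proof.
rewrite gsignE /cnt (_ : [set _ | _] = set0) ?cards0 //.
by apply/setP => p; rewrite !inE andbF.
Qed.

Lemma gsignC S T : [disjoint S & T] ->
  gsign S T * gsign T S = (-1) ^+ (#|S| * #|T|) :> K.
Proof.
move=> D; rewrite !gsignE -exprD mulnC -cardsX; congr (_ ^+ _).
pose sw (p : gen V * gen V) := (p.2, p.1).
have swK : involutive sw by case.
rewrite /cnt -(card_preimset _ (inv_inj swK)) -cardsDU.
  apply: eq_card => -[a b]; rewrite !inE /=.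
  case aT: (a \in T); case bS: (b \in S); rewrite ?andbF //=.
  case: (ltngtP (enum_rank b) (enum_rank a)) => // E; have ba : b = a by apply: enum_rank_inj; apply: val_inj.
  by move/disjP: D => /(_ b bS); rewrite ba aT => /(_ isT).
apply/disjP => -[a b]; rewrite !inE /= => /andP[_ ba] /andP[_ ab].
by have := ltn_trans ba ab; rewrite ltnn.
Qed.


Lemma disjUl (T0 : finType) (X Y Z : {set T0}) :
  [disjoint X :|: Y & Z] = [disjoint X & Z] && [disjoint Y & Z].
Proof. by rewrite -!setI_eq0 setIUl setU_eq0. Qed.
Lemma disjUr (T0 : finType) (X Y Z : {set T0}) :
  [disjoint X & Y :|: Z] = [disjoint X & Y] && [disjoint X & Z].
Proof. by rewrite -!setI_eq0 setIUr setU_eq0. Qed.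
Lemma disj0l (T0 : finType) (X : {set T0}) : [disjoint set0 & X].
Proof. by rewrite -setI_eq0 set0I. Qed.
Lemma disj0r (T0 : finType) (X : {set T0}) : [disjoint X & set0].
Proof. by rewrite -setI_eq0 setI0. Qed.

Lemma gmul_monoA S T W :
  gmul (gmul (gmono S) (gmono T)) (gmono W) =
  gmul (gmono S) (gmul (gmono T) (gmono W)) :> grass K V.
Proof.
rewrite !gmul_mono.
case dST: [disjoint S & T]; case dTW: [disjoint T & W];
  rewrite ?gmulZl ?gmulZr ?gmul0l ?gmul0r ?gmul_mono ?disjUl ?disjUr ?dST ?dTW
          ?andbF ?gscale0 //.
case dSW: [disjoint S & W]; rewrite ?gscale0 // !gscaleA setUA.
by rewrite gsignUl // gsignUr //; congr gscale; ring.
Qed.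

Lemma gmulA F G H : gmul (gmul F G) H = gmul F (gmul G H).
Proof.
rewrite (gexpand F) !gmul_suml; apply: eq_bigr => S _; rewrite !gmulZl; congr gscale.
rewrite (gexpand G) gmul_sumr !gmul_suml gmul_sumr; apply: eq_bigr => T _.
rewrite gmulZr !gmulZl !gmulZr; congr gscale.
rewrite (gexpand H) !gmul_sumr; apply: eq_bigr => W _.
by rewrite !gmulZr gmul_monoA.
Qed.

Lemma gmul1l F : gmul gone F = F.
Proof.
rewrite /gone {1}(gexpand F) gmul_sumr {2}(gexpand F); apply: eq_bigr => S _.
by rewrite gmulZr gmul_mono disj0l gscaleA gsign0l mulr1 set0U.
Qed.
Lemma gmul1r F : gmul F gone = F.
Proof.
rewrite /gone {1}(gexpand F) gmul_suml {2}(gexpand F); apply: eq_bigr => S _.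
by rewrite gmulZl gmul_mono disj0r gscaleA gsign0r mulr1 setU0.
Qed.

Lemma gmul_monoC S T : ~~ odd #|S| ->
  gmul (gmono S) (gmono T) = gmul (gmono T) (gmono S) :> grass K V.
Proof.
move=> eS; rewrite !gmul_mono [[disjoint T & S]]disjoint_sym; case: ifP => // D.
rewrite setUC; congr gscale.
have := gsignC D; rewrite -signr_odd oddM (negbTE eS) /= expr0 => E.
by rewrite -[RHS]mul1r -E -mulrA gsign_sq mulr1.
Qed.

Lemma gmul_evenC S F : ~~ odd #|S| -> gmul (gmono S) F = gmul F (gmono S).
Proof.
move=> eS; rewrite (gexpand F) gmul_sumr gmul_suml; apply: eq_bigr => T _.
by rewrite gmulZr gmulZl gmul_monoC.
Qed.


Definition Pk (k : V) : grass K V := gmul (psibar k) (psi k).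
Definition sk (k : V) : K := gsign [set (true, k)] [set (false, k)].

Lemma pairsetE k : pairset k = [set (true, k)] :|: [set (false, k)] :> {set gen V}.
Proof. by apply/setP => x; rewrite !inE orbC. Qed.

Lemma Pk_def k : Pk k = gscale (sk k) (gmono (pairset k)).
Proof.
rewrite /Pk /psibar /psi gmul_mono pairsetE.
case: ifP => // /negP []; apply/disjP => x; rewrite !inE => /eqP -> /eqP.
by case.
Qed.

Lemma card_pairset k : #|pairset k| = 2%N.
Proof. by rewrite /pairset cards2. Qed.

Lemma PkC k F : gmul (Pk k) F = gmul F (Pk k).
Proof. by rewrite Pk_def gmulZl gmulZr gmul_evenC // card_pairset. Qed.

Lemma pair_in1 k : (false, k) \in pairset k.
Proof. by rewrite !inE eqxx. Qed.
Lemma pair_in2 k : (true, k) \in pairset k.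
Proof. by rewrite !inE eqxx orbT. Qed.

Lemma PkPk k : gmul (Pk k) (Pk k) = 0.
Proof.
rewrite Pk_def gmulZl gmulZr gmul_mono.
case: ifP => [/disjP D|_]; last by rewrite !gscale0.
by case: (D _ (pair_in1 k) (pair_in1 k)).
Qed.

Lemma gexpP k t : gexp (gscale t (Pk k)) = gone + gscale t (Pk k).
Proof.
rewrite /gexp gbigE.
have : (0 < #|{: gen V}|)%N by apply/card_gt0P; exists (true, k).
case: #|{: gen V}| => // n _.
rewrite big_ord_recl big_ord_recl big1 => [|i _]; last first.
  have e2 : nat_of_ord (lift ord0 (lift ord0 i)) = (2 + i)%N by [].
  rewrite e2 iterD.
  rewrite -[iter 2 _ _]/(gmul _ (gmul _ _)) -gmulA gmulZl gmulZr PkPk.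
  by rewrite !gscale0 gmul0l gscale0.
have e1 : nat_of_ord (lift ord0 (@ord0 n)) = 1%N by [].
have e0 : nat_of_ord (@ord0 n.+1) = 0%N by [].
rewrite addr0 e1 e0.
rewrite -[iter 1 _ _]/(gmul _ gone) -[iter 0 _ _]/gone gmul1r.
by rewrite -[1`!]/1%N -[0`!]/1%N invr1 !gscale1.
Qed.

Definition avoid X (F : grass K V) := forall U, F U != 0 -> [disjoint U & X].

Lemma gmul_supp (Pr : pred {set gen V}) F G :
  (forall S T, F S != 0 -> G T != 0 -> [disjoint S & T] -> Pr (S :|: T)) ->
  forall U, gmul F G U != 0 -> Pr U.
Proof.
move=> H U; apply: contraR => nPU; rewrite ffunE big1 // => S _.
rewrite big1 // => T _; case: ifP => // /andP[D /eqP SU].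
have [FS|FS] := eqVneq (F S) 0; first by rewrite FS mulr0 mul0r.
have [GT|GT] := eqVneq (G T) 0; first by rewrite GT mulr0.
by move: (H S T FS GT D); rewrite SU (negbTE nPU).
Qed.

Lemma avoid_mul X F G : avoid X F -> avoid X G -> avoid X (gmul F G).
Proof.
move=> aF aG; apply: gmul_supp => S T FS GT _.
by rewrite disjUl aF ?aG.
Qed.
Lemma avoidD X F G : avoid X F -> avoid X G -> avoid X (F + G).
Proof.
move=> aF aG U; rewrite ffunE /=.
have [FU|FU] := eqVneq (F U) 0; first by rewrite FU add0r => /aG.
by move=> _; apply: aF.
Qed.
Lemma avoid0 X : avoid X 0.
Proof. by move=> U; rewrite ffunE eqxx. Qed.
Lemma avoidZ X c F : avoid X F -> avoid X (gscale c F).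
Proof.
move=> aF U; rewrite ffunE.
by have [FU|FU] := eqVneq (F U) 0; [rewrite FU mulr0 eqxx | move=> _; apply: aF].
Qed.
Lemma avoid_sum X (I : Type) (r : seq I) (P : pred I) (Fi : I -> grass K V) :
  (forall i, P i -> avoid X (Fi i)) -> avoid X (\sum_(i <- r | P i) Fi i).
Proof.
move=> H; elim/big_rec: _ => [|i x Pi ax]; first exact: avoid0.
by apply: avoidD => //; apply: H.
Qed.
Lemma avoid_mono X S : [disjoint S & X] -> avoid X (gmono S).
Proof. by move=> D U; rewrite ffunE; have [-> _ //|_] := eqVneq U S; rewrite eqxx. Qed.

Lemma berezin1D k F G : berezin1 k (F + G) = berezin1 k F + berezin1 k G.
Proof.
rewrite /berezin1 !gbigE -big_split; apply: eq_bigr => S _.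
by rewrite ffunE /= mulrDl gscaleDl.
Qed.
Lemma berezin1Z k c F : berezin1 k (gscale c F) = gscale c (berezin1 k F).
Proof.
rewrite /berezin1 !gbigE gscale_sum; apply: eq_bigr => S _.
by rewrite ffunE gscaleA mulrA.
Qed.
Lemma berezin10 k : berezin1 k 0 = 0 :> grass K V.
Proof. by rewrite /berezin1 gbigE big1 // => S _; rewrite ffunE mul0r gscale0r. Qed.
Lemma berezin1_sum k (I : Type) (r : seq I) (P : pred I) (Fi : I -> grass K V) :
  berezin1 k (\sum_(i <- r | P i) Fi i) = \sum_(i <- r | P i) berezin1 k (Fi i).
Proof. exact: (big_morph (berezin1 k) (berezin1D k) (berezin10 k)). Qed.

Lemma berezin1_nosub k G :
  (forall U, G U != 0 -> ~~ (pairset k \subset U)) -> berezin1 k G = 0.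
Proof.
move=> H; rewrite /berezin1 gbigE big1 // => S sub.
have [GS|GS] := eqVneq (G S) 0; first by rewrite GS mul0r gscale0r.
by move: (H S GS); rewrite sub.
Qed.

Lemma berezin1_Pmono k S : [disjoint S & pairset k] ->
  berezin1 k (gmul (Pk k) (gmono S)) = gmono S.
Proof.
move=> D.
have E : gmul (Pk k) (gmono S) =
         gscale (sk k * gsign (pairset k) S) (gmono (pairset k :|: S)).
  by rewrite Pk_def gmulZl gmul_mono disjoint_sym D gscaleA.
rewrite /berezin1 gbigE (bigD1 (pairset k :|: S)) ?subsetUl //= big1 => [|U /andP[_ UP]].
  rewrite addr0 setDUl setDv set0U (setDidPl D) -/(Pk k) E !ffunE eqxx mulr1.
  by rewrite mulrACA /sk !gsign_sq mulr1 gscale1.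
by rewrite E !ffunE (negbTE UP) mulr0 mul0r gscale0r.
Qed.

Lemma berezin1_P k G : avoid (pairset k) G -> berezin1 k (gmul (Pk k) G) = G.
Proof.
move=> aG; rewrite {1}(gexpand G) gmul_sumr berezin1_sum {2}(gexpand G).
apply: eq_bigr => S _; rewrite gmulZr berezin1Z.
have [GS|GS] := eqVneq (G S) 0; first by rewrite GS !gscale0r.
by rewrite berezin1_Pmono // aG.
Qed.

Definition Iop k t G := berezin1 k (gmul (gexp (gscale t (Pk k))) G).

Lemma IopE k t G : Iop k t G = berezin1 k G + gscale t (berezin1 k (gmul (Pk k) G)).
Proof. by rewrite /Iop gexpP gmulDl gmul1l gmulZl berezin1D berezin1Z. Qed.

Lemma IopD k t F G : Iop k t (F + G) = Iop k t F + Iop k t G.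
Proof. by rewrite /Iop gmulDr berezin1D. Qed.
Lemma IopZ k t c F : Iop k t (gscale c F) = gscale c (Iop k t F).
Proof. by rewrite /Iop gmulZr berezin1Z. Qed.
Lemma Iop0 k t : Iop k t 0 = 0.
Proof. by rewrite /Iop gmul0r berezin10. Qed.
Lemma Iop_sum k t (I : Type) (r : seq I) (P : pred I) (Fi : I -> grass K V) :
  Iop k t (\sum_(i <- r | P i) Fi i) = \sum_(i <- r | P i) Iop k t (Fi i).
Proof. exact: (big_morph (Iop k t) (IopD k t) (Iop0 k t)). Qed.

Lemma avoid_nosub k G : avoid (pairset k) G ->
  forall U, G U != 0 -> ~~ (pairset k \subset U).
Proof.
move=> aG U GU; apply/negP => /subsetP sub.
by move/disjP: (aG U GU) => /(_ _ (sub _ (pair_in1 k))) /(_ (pair_in1 k)).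
Qed.

Lemma Iop_avoid k t G : avoid (pairset k) G -> Iop k t G = gscale t G.
Proof.
move=> aG; rewrite IopE (berezin1_nosub (avoid_nosub aG)) add0r berezin1_P //.
Qed.

Lemma Iop_P k t G : avoid (pairset k) G -> Iop k t (gmul (Pk k) G) = G.
Proof.
move=> aG; rewrite IopE berezin1_P // -gmulA PkPk gmul0l berezin10 gscale0 addr0 //.
Qed.

Lemma Iop_bad k t G :
  (forall U, G U != 0 -> ~~ (pairset k \subset U) && ~~ [disjoint U & pairset k]) ->
  Iop k t G = 0.
Proof.
move=> H; rewrite IopE berezin1_nosub => [|U /H /andP[] //].
rewrite add0r (_ : gmul _ _ = 0) ?berezin10 ?gscale0 //.
rewrite (gexpand G) gmul_sumr big1 // => S _; rewrite gmulZr.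
have [GS|GS] := eqVneq (G S) 0; first by rewrite GS gscale0r.
move: (H S GS) => /andP[_ nD].
by rewrite Pk_def gmulZl gmul_mono disjoint_sym (negbTE nD) !gscale0.
Qed.


Lemma big_P_notin (r : seq V) (P : pred V) k : k \notin r ->
  \big[gmul/gone]_(i <- r | P i && (i != k)) Pk i = \big[gmul/gone]_(i <- r | P i) Pk i.
Proof.
elim: r => [|a r IH]; first by rewrite !big_nil.
rewrite inE negb_or => /andP[ak kr]; rewrite !big_cons IH // eq_sym ak andbT //.
Qed.

Lemma big_P_rem (r : seq V) (P : pred V) k : uniq r -> k \in r -> P k ->
  \big[gmul/gone]_(i <- r | P i) Pk i =
  gmul (Pk k) (\big[gmul/gone]_(i <- r | P i && (i != k)) Pk i).
Proof.
elim: r => [|a r IH] //= /andP[ar ur]; rewrite inE => kr Pkk.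
rewrite !big_cons; have [ak|ak] := eqVneq k a.
  by subst a; rewrite Pkk andbF big_P_notin.
rewrite IH //; last by move: kr; rewrite (negbTE ak).
rewrite andbT; case: (P a); last by [].
rewrite -(gmulA (Pk a)) -(gmulA (Pk k)) (PkC a); done.
Qed.

Lemma tauE A : tau A = \big[gmul/gone]_(i in A) Pk i.
Proof. by []. Qed.

Lemma tau_D1 A k : k \in A -> tau A = gmul (Pk k) (tau (A :\ k)) :> grass K V.
Proof.
move=> kA; rewrite !tauE (big_P_rem (k:=k)) ?index_enum_uniq ?mem_index_enum //.
by congr gmul; apply: eq_bigl => i; rewrite in_setD1 andbC.
Qed.

Lemma disj_gen1 b i k : i != k -> [disjoint [set (b, i)] & pairset k].
Proof.
move=> ik; apply/disjP => x; rewrite !inE => /eqP -> /orP[] /eqP [_ ik'];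
by rewrite ik' eqxx in ik.
Qed.

Lemma avoid_psi i k : i != k -> avoid (pairset k) (psi i : grass K V).
Proof. by move=> ik; apply: avoid_mono; apply: disj_gen1. Qed.
Lemma avoid_psibar i k : i != k -> avoid (pairset k) (psibar i : grass K V).
Proof. by move=> ik; apply: avoid_mono; apply: disj_gen1. Qed.
Lemma avoid_one X : avoid X (gone : grass K V).
Proof. by apply: avoid_mono; apply: disj0l. Qed.

Lemma avoid_tau A k : k \notin A -> avoid (pairset k) (tau A : grass K V).
Proof.
move=> kA; rewrite tauE; elim/big_rec: _ => [|i x iA ax]; first exact: avoid_one.
apply: avoid_mul => //; apply: avoid_mul; [apply: avoid_psibar|apply: avoid_psi];
by apply: contraNneq kA => <-.
Qed.

Lemma avoid_fA lam A k : k \notin A -> avoid (pairset k) (fA lam A : grass K V).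
Proof.
have ne i : i \in A -> k \notin A -> i != k by move=> iA; apply: contraNneq => <-.
move=> kA; rewrite /fA !gaddE !gbigE.
apply: avoidD; [apply: avoidD|]; first by apply: avoidZ; apply: avoid_tau.
  apply: avoid_sum => i iA; apply: avoid_tau; rewrite in_setD1 negb_and.
  by rewrite kA orbT.
apply: avoidZ; apply: avoid_sum => i iA; apply: avoid_sum => j /andP[jA _].
apply: avoid_mul; first by apply: avoid_mul; [apply: avoid_psibar|apply: avoid_psi]; apply: ne.
by apply: avoid_tau; rewrite !in_setD1 !negb_and kA !orbT.
Qed.

Lemma Iop_tau_in k t A : k \in A -> Iop k t (tau A) = tau (A :\ k).
Proof. by move=> kA; rewrite (tau_D1 kA) Iop_P //; apply: avoid_tau; rewrite setD11. Qed.
Lemma Iop_tau_out k t A : k \notin A -> Iop k t (tau A) = gscale t (tau A).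
Proof. by move=> kA; rewrite Iop_avoid //; apply: avoid_tau. Qed.
Lemma Iop_fA_out k t lam A : k \notin A -> Iop k t (fA lam A) = gscale t (fA lam A).
Proof. by move=> kA; rewrite Iop_avoid //; apply: avoid_fA. Qed.

Lemma Iop_bad_mono k t S0 G x y : x \in pairset k -> y \in pairset k ->
  x \in S0 -> y \notin S0 -> avoid (pairset k) G ->
  Iop k t (gmul (gmono S0) G) = 0.
Proof.
move=> xP yP xS yS aG; apply: Iop_bad.
apply: (@gmul_supp (fun U => ~~ (pairset k \subset U) && ~~ [disjoint U & pairset k])) => S T.
rewrite ffunE; have [-> _|_] := eqVneq S S0; last by rewrite eqxx.
move=> /aG /disjP DT _; apply/andP; split.
  apply/negP => sub; have := subsetP sub y yP; rewrite inE (negbTE yS) /= => yT.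
  exact: DT y yT yP.
apply/negP => /disjP D; apply: (D x) => //; by rewrite inE xS.
Qed.

Lemma Iop_bad1 k t j G : j != k -> avoid (pairset k) G ->
  Iop k t (gmul (gmul (psibar k) (psi j)) G) = 0.
Proof.
move=> jk aG; rewrite /psibar /psi gmul_mono; case: ifP => _; last by rewrite gmul0l Iop0.
rewrite gmulZl IopZ (@Iop_bad_mono _ _ _ _ (true, k) (false, k)) ?gscale0 //;
  rewrite ?pair_in1 ?pair_in2 // !inE ?eqxx //= xpair_eqE /= eq_sym (negbTE jk) //.
Qed.

Lemma Iop_bad2 k t i G : i != k -> avoid (pairset k) G ->
  Iop k t (gmul (gmul (psibar i) (psi k)) G) = 0.
Proof.
move=> ik aG; rewrite /psibar /psi gmul_mono; case: ifP => _; last by rewrite gmul0l Iop0.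
rewrite gmulZl IopZ (@Iop_bad_mono _ _ _ _ (false, k) (true, k)) ?gscale0 //;
  rewrite ?pair_in1 ?pair_in2 // !inE ?eqxx ?orbT //= xpair_eqE /= eq_sym (negbTE ik) //.
Qed.


Lemma setD1C (T0 : finType) (B : {set T0}) (a b : T0) : B :\ a :\ b = B :\ b :\ a.
Proof. by apply/setP => x; rewrite !in_setD1; case: (x == a); case: (x == b). Qed.

Lemma Iop_good k t A i j : k \in A -> i != k -> j != k ->
  Iop k t (gmul (gmul (psibar i) (psi j)) (tau (A :\ i :\ j))) =
  gmul (gmul (psibar i) (psi j)) (tau (A :\ k :\ i :\ j)).
Proof.
move=> kA ik jk.
have kA' : k \in A :\ i :\ j.
  by rewrite !in_setD1 kA (eq_sym k i) (eq_sym k j) ik jk.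
rewrite (tau_D1 kA') -gmulA -(PkC k) gmulA Iop_P.
  congr (gmul _ (tau _)); apply/setP => x; rewrite !in_setD1.
  by case: (x == i); case: (x == j); case: (x == k).
apply: avoid_mul; first by apply: avoid_mul; [apply: avoid_psibar|apply: avoid_psi].
by apply: avoid_tau; rewrite setD11.
Qed.

Lemma fA_E lam A : fA lam A =
  gscale (lam * (1 - (#|A|)%:R)) (tau A) + \sum_(i in A) tau (A :\ i)
  - \sum_(i in A) \sum_(j in A | j != i)
       gmul (gmul (psibar i) (psi j)) (tau (A :\ i :\ j)).
Proof.
rewrite /fA !gaddE !gbigE gscaleN1; congr (_ - _).
Qed.

Lemma IopN k t F : Iop k t (- F) = - Iop k t F.
Proof. by rewrite -!gscaleN1 IopZ. Qed.

Lemma Iop_fA_in k t lam A : k \in A ->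
  Iop k t (fA lam A) = fA lam (A :\ k) + gscale (t - lam) (tau (A :\ k)).
Proof.
move=> kA; rewrite !fA_E IopD IopD IopN IopZ Iop_sum (Iop_tau_in _ kA).
have kk : k \notin A :\ k by rewrite setD11.
rewrite [X in _ + X - _](bigD1 k kA) /= (Iop_tau_out _ kk).
rewrite [X in _ + (_ + X) - _](eq_big (fun i => i \in A :\ k)
           (fun i => tau (A :\ k :\ i))); last 2 first.
- by move=> i; rewrite in_setD1 andbC.
- move=> i /andP[iA ik]; rewrite Iop_tau_in; first by rewrite setD1C.
  by rewrite in_setD1 (eq_sym k i) ik kA.
rewrite Iop_sum [X in _ - X](bigD1 k kA) /=.
rewrite [X in _ - (X + _)]Iop_sum [X in _ - (X + _)]big1; last first.
  move=> j /andP[jA jk]; apply: Iop_bad1 => //; apply: avoid_tau.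
  by rewrite !in_setD1 eqxx !andbF.
rewrite add0r.
rewrite [X in _ - X](eq_big (fun i => i \in A :\ k)
   (fun i => \sum_(j in A :\ k | j != i)
      gmul (gmul (psibar i) (psi j)) (tau (A :\ k :\ i :\ j)))); last 2 first.
- by move=> i; rewrite in_setD1 andbC.
- move=> i /andP[iA ik]; rewrite Iop_sum (bigD1 k); last by rewrite kA eq_sym ik.
  rewrite /= Iop_bad2 //; last by apply: avoid_tau; rewrite !in_setD1 eqxx ?andbF ?andFb.
  rewrite add0r; apply: eq_big => [j|j /andP[/andP[jA ji] jk]].
    by rewrite in_setD1; case: (j == k); rewrite ?andbF ?andbT.
  by rewrite Iop_good.
have cA : (#|A|%:R : K) = #|A :\ k|%:R + 1 by rewrite (cardsD1 k A) kA add1n -natr1.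
rewrite cA; apply/ffunP => U; rewrite !ffunE /=; ring.
Qed.


Lemma fold_main lam A (t : V -> K) (s : seq V) : uniq s ->
  foldr (fun i G => Iop i (t i) G) (fA lam A) s =
  gscale (\prod_(i <- s | i \notin A) t i)
    (fA lam (A :\: [set x in s]) +
     gscale (\sum_(i <- s | i \in A) (t i - lam)) (tau (A :\: [set x in s]))).
Proof.
elim: s => [|a s IH] /=.
  move=> _; rewrite !big_nil gscale1 gscale0r addr0.
  by congr fA; apply/setP => x; rewrite !inE.
move=> /andP[aS uS]; rewrite (IH uS) !big_cons.
set A' := A :\: [set x in s].
have E : A :\: [set x in a :: s] = A' :\ a.
  by apply/setP => x; rewrite !inE negb_or andbA andbC.
rewrite E; case: (boolP (a \in A)) => aA.
  have aA' : a \in A' by rewrite !inE aA andbT.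
  rewrite IopZ IopD IopZ (Iop_fA_in _ _ aA') (Iop_tau_in _ aA').
  set F1 := fA lam _; set T1 := tau _.
  by congr gscale; apply/ffunP => U; rewrite !ffunE /=; ring.
have aA' : a \notin A' by rewrite !inE negb_and aA orbT.
have E2 : A' :\ a = A'.
  by apply/setP => x; rewrite in_setD1; case: eqVneq => // ->; rewrite (negbTE aA').
rewrite E2 IopZ IopD IopZ (Iop_fA_out _ _ aA') (Iop_tau_out _ aA').
set F1 := fA lam _; set T1 := tau _.
by apply/ffunP => U; rewrite !ffunE /=; ring.
Qed.


Lemma berezinD_main (B A : {set V}) (t : V -> K) lam :
  berezinD B t (fA lam A) =
    gscale (\prod_(i in B :\: A) t i)
      (gadd (fA lam (A :\: B))
            (gscale (\sum_(i in B :&: A) (t i - lam)) (tau (A :\: B)))).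
Proof.
have -> : berezinD B t (fA lam A) = foldr (fun i G => Iop i (t i) G) (fA lam A) (enum B).
  by [].
rewrite fold_main ?enum_uniq // gaddE.
have EB : [set x in enum B] = B by apply/setP => x; rewrite inE mem_enum.
rewrite EB big_enum_cond big_enum_cond.
rewrite [X in gscale X _](eq_bigl (fun i => i \in B :\: A)); last first.
  by move=> i; rewrite inE andbC.
rewrite [X in gscale X (tau _)](eq_bigl (fun i => i \in B :&: A)) //.
by move=> i; rewrite inE.
Qed.

Lemma berezinD_full (A : {set V}) (t : V -> K) lam :
  berezinD A t (fA lam A) = gconst (lam + \sum_(i in A) (t i - lam)).
Proof.
rewrite berezinD_main setDv setIid big_set0 gscale1 gaddE fA_E /gconst.
rewrite !big_set0 cards0 subr0 tauE big_set0 addr0 subr0 mulr1.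
by rewrite gscaleDl.
Qed.

End S.

Theorem corollary5p2 (R : realType) (V : finType) (A B : {set V})
    (t : V -> R[i]) (lam : R[i]) :
  berezinD B t (fA lam A) =
    gscale (\prod_(i in B :\: A) t i)
      (gadd (fA lam (A :\: B))
            (gscale (\sum_(i in B :&: A) (t i - lam)) (tau (A :\: B))))
  /\ berezinD A t (fA lam A) = gconst (lam + \sum_(i in A) (t i - lam)).
Proof. by split; [apply: berezinD_main | apply: berezinD_full]. Qed.
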